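(* Let $a,b$ be rational numbers with $a+b\in\mathbb{Z}$, and let $n$ be a nonnegative integer with $n\ge -(a+b)$. Then, as $z\to\infty$, $$\left(\frac{z-1}{2}\right)^a\left(\frac{z+1}{2}\right)^b J_n(a,b,z)-J_{n+a+b}(-a,-b,z)=O\big(z^{-(n+1)}\big),$$ i.e. the Laurent expansion at $\infty$ of the left-hand side contains only powers $z^j$ with $j\le -(n+1)$.
   Context: For a nonnegative integer $N$ and complex parameters $\alpha,\beta$, the (generalized) Jacobi polynomial is $$J_N(\alpha,\beta,x)=\sum_{j=0}^{N}\binom{N+\alpha+\beta+j}{j}\binom{N+\alpha}{N-j}\left(\frac{x-1}{2}\right)^j,$$ where $\binom{y}{j}=y(y-1)\cdots(y-j+1)/j!$ for arbitrary $y$. For rational $a,b$ with $a+b\in\mathbb Z$, the expression $(z-1)^a(z+1)^b$ denotes the single-valued function on $|z|>1$ given by $z^{a+b}(1-1/z)^a(1+1/z)^b$ (principal binomial series), i.e. the branch whose Laurent expansion at $\infty$ has leading term $z^{a+b}$ with coefficient $1$; and $\left(\frac{z-1}{2}\right)^a\left(\frac{z+1}{2}\right)^b$ means $2^{-(a+b)}(z-1)^a(z+1)^b$. Note $n+a+b$ is a nonnegative integer, so $J_{n+a+b}(-a,-b,z)$ is defined. *)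

(* Defs.v *)
From mathcomp Require Import all_boot all_order all_algebra.
Set Implicit Arguments. Unset Strict Implicit. Unset Printing Implicit Defensive.
Import Order.TTheory GRing.Theory Num.Theory.
Local Open Scope ring_scope.

Definition gbinom (y : rat) (j : nat) : rat :=
  (\prod_(i < j) (y - i%:R)) / (j`!)%:R.

Definition jacobi (N : nat) (al be : rat) : {poly rat} :=
  \sum_(j < N.+1)
     (gbinom (N%:R + al + be + j%:R) j * gbinom (N%:R + al) (N - j)) *:
       (('X - 1) * (2%:R)^-1%:P) ^+ j.

(* coefficient of w^k in (1 - w)^a (1 + w)^b (principal binomial series) *)
Definition binser_coef (a b : rat) (k : nat) : rat :=
  \sum_(i < k.+1) gbinom a i * (-1) ^+ i * gbinom b (k - i).

(* coefficient of z^m in the Laurent expansion at infinity of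
   ((z-1)/2)^a ((z+1)/2)^b = 2^-(a+b) z^(a+b) (1-1/z)^a (1+1/z)^b,
   where s = a + b is an integer *)
Definition prefactor_coef (a b : rat) (s : int) (m : int) : rat :=
  match (s - m)%R with
  | Posz k => (2%:R : rat) ^ (- s) * binser_coef a b k
  | Negz _ => 0
  end.

Definition pcoef (p : {poly rat}) (m : int) : rat :=
  match m with Posz k => p`_k | Negz _ => 0 end.

(* coefficient of z^m in the product of a Laurent series at infinity
   (given by its coefficient function f) with a polynomial p *)
Definition lmul_poly_coef (f : int -> rat) (p : {poly rat}) (m : int) : rat :=
  \sum_(d < size p) p`_d * f (m - d%:Z)%R.

(* Main.v *)
Require Import Defs.
From mathcomp Require Import all_boot all_order all_algebra.
From mathcomp Require Import zify ring lra.
From Stdlib Require Import FunctionalExtensionality.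
Import Order.TTheory GRing.Theory Num.Theory.
Local Open Scope ring_scope.



Definition ser := int -> rat.
Definition Zs (h : ser) : ser := fun m => h (m - 1).
Definition Ds (h : ser) : ser := fun m => (m%:~R + 1) * h (m + 1).

Lemma lmulE (f : ser) (p : {poly rat}) m K : (size p <= K)%N ->
  lmul_poly_coef f p m = \sum_(d < K) p`_d * f (m - d%:Z).
Proof.
move=> hK; rewrite /lmul_poly_coef (big_ord_widen K (fun d => p`_d * f (m - d%:Z))) //.
rewrite big_mkcond /=; apply: eq_bigr => i _.
case: ifP => // /negbT; rewrite -leqNgt => hi.
by rewrite nth_default // mul0r.
Qed.

Lemma lmulX f p m : lmul_poly_coef f ('X * p) m = lmul_poly_coef f p (m - 1).
Proof.
rewrite (@lmulE _ _ _ (size p).+1); last first.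
  case: (eqVneq p 0) => [->|pn0]; first by rewrite mulr0 size_poly0.
  by rewrite mulrC size_mulX.
rewrite big_ord_recl coefXM eqxx mul0r add0r (@lmulE _ _ _ (size p)) //.
apply: eq_bigr => i _; rewrite coefXM /=; congr (_ * f _).
rewrite /bump /=; lia.
Qed.

Lemma lmulZs f p m : lmul_poly_coef (Zs f) p m = lmul_poly_coef f p (m - 1).
Proof.
rewrite /lmul_poly_coef /Zs; apply: eq_bigr => i _; congr (_ * f _); lia.
Qed.

Lemma lmul_addf f g p m : lmul_poly_coef (fun k => f k + g k) p m =
  lmul_poly_coef f p m + lmul_poly_coef g p m.
Proof. by rewrite /lmul_poly_coef -big_split; apply: eq_bigr => i _; rewrite mulrDr. Qed.

Lemma lmul_scalef c f p m : lmul_poly_coef (fun k => c * f k) p m =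
  c * lmul_poly_coef f p m.
Proof. by rewrite /lmul_poly_coef mulr_sumr; apply: eq_bigr => i _; rewrite mulrCA. Qed.

Lemma lmul_addp f p q m : lmul_poly_coef f (p + q) m =
  lmul_poly_coef f p m + lmul_poly_coef f q m.
Proof.
rewrite !(@lmulE _ _ _ (maxn (size p) (size q))) ?leq_maxl ?leq_maxr ?size_polyD //.
by rewrite -big_split; apply: eq_bigr => i _; rewrite coefD mulrDl.
Qed.

Lemma lmul_scalep f c p m : lmul_poly_coef f (c *: p) m = c * lmul_poly_coef f p m.
Proof.
rewrite !(@lmulE _ _ _ (size p)) ?size_scale_leq // mulr_sumr.
by apply: eq_bigr => i _; rewrite coefZ mulrA.
Qed.

Lemma lmulD f p m : Ds (lmul_poly_coef f p) m =
  lmul_poly_coef (Ds f) p m + lmul_poly_coef f p^`() m.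
Proof.
rewrite /Ds !(@lmulE _ _ _ (size p).+1) ?leqnSn //; last first.
  case: (eqVneq p 0) => [->|pn0]; first by rewrite deriv0 size_poly0.
  exact: leq_trans (ltnW (lt_size_deriv pn0)) (leqnSn _).
rewrite mulr_sumr.
have -> : \sum_(i < (size p).+1) p^`()`_i * f (m - i%:Z)
   = \sum_(i < (size p).+1) p`_i * (i%:R * f (m + 1 - i%:Z)).
  rewrite big_ord_recr /= coef_deriv nth_default // mul0rn mul0r addr0.
  rewrite big_ord_recl /= mul0r mulr0 add0r; apply: eq_bigr => i _.
  rewrite coef_deriv /bump /= add1n.
  have -> : m + 1 - (i.+1)%:Z = m - (i : nat)%:Z by lia.
  by rewrite mulrA mulr_natr.
rewrite -big_split; apply: eq_bigr => i _ /=.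
have -> : m - i%:Z + 1 = m + 1 - i%:Z by lia.
rewrite mulrCA -mulrDr -mulrDl; congr (_ * (_ * _)).
rewrite rmorphB /=.
have -> : ((i : nat)%:Z)%:~R = (i : nat)%:R :> rat by [].
ring.
Qed.


Lemma gbinom0 y : gbinom y 0 = 1.
Proof. by rewrite /gbinom big_ord0 fact0 divr1. Qed.

Lemma gbinomS y j : gbinom y j.+1 * j.+1%:R = gbinom y j * (y - j%:R).
Proof.
rewrite /gbinom big_ord_recr /= factS natrM.
have h1 : (j.+1%:R : rat) != 0 by rewrite pnatr_eq0.
have h2 : ((j`!)%:R : rat) != 0 by rewrite pnatr_eq0 -lt0n fact_gt0.
field. by rewrite h2 addrC natr1 h1.
Qed.

Lemma coefXderiv (p : {poly rat}) i : ('X * p^`())`_i = i%:R * p`_i.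
Proof.
rewrite coefXM; case: i => [|i] /=; first by rewrite mul0r.
by rewrite coef_deriv mulr_natl.
Qed.

Definition lowc (M : nat) (p : {poly rat}) := forall i, (i < M)%N -> p`_i = 0.

Lemma lowc_mull M r p : lowc M p -> lowc M (r * p).
Proof.
move=> hp i hi; rewrite coefM big1 // => j _; rewrite hp ?mulr0 //.
exact: leq_ltn_trans (leq_subr _ _) hi.
Qed.

Lemma lowc_add M p q : lowc M p -> lowc M q -> lowc M (p + q).
Proof. by move=> hp hq i hi; rewrite coefD hp ?hq ?addr0. Qed.

Section Binser.
Variables (a b : rat) (M : nat).
Let A : {poly rat} := \poly_(i < M) (gbinom a i * (-1) ^+ i).
Let C : {poly rat} := \poly_(i < M) (gbinom b i).

Lemma lowA : lowc M.-1 ((1 - 'X) * A^`() + a *: A).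
Proof.
move=> i hi; rewrite mulrBl mul1r coefD coefB coefXderiv coef_deriv coefZ.
rewrite !coef_poly.
have h1 : (i.+1 < M)%N by lia.
have h2 : (i < M)%N by lia.
rewrite h1 h2 -mulr_natr exprS.
have e := gbinomS a i.
transitivity ((-1) ^+ i * (gbinom a i * (a - i%:R) - gbinom a i.+1 * i.+1%:R)); first ring.
by rewrite e subrr mulr0.
Qed.

Lemma lowC : lowc M.-1 ((1 + 'X) * C^`() - b *: C).
Proof.
move=> i hi; rewrite mulrDl mul1r coefB coefD coefXderiv coef_deriv coefZ.
rewrite !coef_poly.
have h1 : (i.+1 < M)%N by lia.
have h2 : (i < M)%N by lia.
rewrite h1 h2 -mulr_natr.
have e := gbinomS b i.
transitivity (gbinom b i.+1 * i.+1%:R - gbinom b i * (b - i%:R)); first ring.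
by rewrite e subrr.
Qed.

Lemma lowT : lowc M.-1 ((1 - 'X^2) * (A * C)^`()
   - ((b - a)%:P - (a + b)%:P * 'X) * (A * C)).
Proof.
have -> : (1 - 'X^2) * (A * C)^`() - ((b - a)%:P - (a + b)%:P * 'X) * (A * C)
  = ((1 + 'X) * C) * ((1 - 'X) * A^`() + a *: A)
    + ((1 - 'X) * A) * ((1 + 'X) * C^`() - b *: C).
  rewrite derivM -!mul_polyC polyCB polyCD; ring.
apply: lowc_add; apply: lowc_mull; [exact: lowA | exact: lowC].
Qed.

Lemma coefAC k : (k < M)%N -> (A * C)`_k = binser_coef a b k.
Proof.
move=> hk; rewrite coefM /binser_coef; apply: eq_bigr => i _.
rewrite !coef_poly.
have h1 : (i < M)%N by have := ltn_ord i; lia.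
have h2 : (k - i < M)%N by lia.
by rewrite h1 h2.
Qed.

End Binser.

Lemma coefTS a b (W : {poly rat}) i :
  ((1 - 'X^2) * W^`() - ((b - a)%:P - (a + b)%:P * 'X) * W)`_i.+1
  = (i.+2)%:R * W`_i.+2 - i%:R * W`_i - (b - a) * W`_i.+1 + (a + b) * W`_i.
Proof.
rewrite mulrBl mul1r !coefB coef_deriv expr2 -mulrA coefXM /= coefXderiv.
rewrite mulrBl coefB coefCM -mulrA coefCM coefXM /= -mulr_natl; ring.
Qed.

Lemma coefT0 a b (W : {poly rat}) :
  ((1 - 'X^2) * W^`() - ((b - a)%:P - (a + b)%:P * 'X) * W)`_0
  = W`_1 - (b - a) * W`_0.
Proof.
rewrite mulrBl mul1r !coefB coef_deriv expr2 -mulrA coefXM /=.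
rewrite mulrBl coefB coefCM -mulrA coefCM coefXM /=; ring.
Qed.

Lemma binser_rec0 a b : binser_coef a b 1 + (a - b) * binser_coef a b 0 = 0.
Proof.
have := lowT a b 2 0 isT; rewrite coefT0 !coefAC //.
move=> e; rewrite -e; ring.
Qed.

Lemma binser_recS a b k : (k.+2)%:R * binser_coef a b k.+2 + (a - b) * binser_coef a b k.+1
   + (a + b - k%:R) * binser_coef a b k = 0.
Proof.
have := lowT a b k.+4 k.+1 (ltac:(by [])); rewrite coefTS !coefAC; [|lia..].
move=> e; rewrite -e; ring.
Qed.

Lemma gODE a b (s : int) (hs : a + b = s%:~R) (m : int) :
  let g := prefactor_coef a b s in
  (m%:~R - 1) * g (m - 1) - (m%:~R + 1) * g (m + 1) = s%:~R * g (m - 1) + (a - b) * g m.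
Proof.
move=> g; rewrite /g /prefactor_coef.
have -> : m = s - (s - m) by ring.
move: (s - m) => k.
have e1 : s - (s - k - 1) = k + 1 by ring.
have e2 : s - (s - k + 1) = k - 1 by ring.
have e3 : s - (s - k) = k by ring.
rewrite e1 e2 e3 !rmorphB /= -hs.
set c := (2%:R : rat) ^ (- s).
clear e1 e2 e3.
case: k => [[|k]|[|j]] /=.
- have := binser_rec0 a b; rewrite /= => e.
  rewrite !addn1 mulr0 subr0.
  have -> : (0%:Z)%:~R = 0 :> rat by [].
  rewrite subr0; apply/eqP; rewrite -subr_eq0; apply/eqP.
  transitivity (- c * (binser_coef a b 1 + (a - b) * binser_coef a b 0)); first by ring.
  by rewrite e mulr0.
- have e := binser_recS a b k.
  rewrite !addn1 subn1 /=.
  have -> : (k.+1%:Z)%:~R = k.+1%:R :> rat by [].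
  rewrite -natr1; apply/eqP; rewrite -subr_eq0; apply/eqP.
  transitivity (- c * (k.+2%:R * binser_coef a b k.+2 + (a - b) * binser_coef a b k.+1 +
    (a + b - k%:R) * binser_coef a b k)); first by rewrite -natr1 -[k.+1%:R]natr1; ring.
  by rewrite e mulr0.
- have -> : (Negz 0)%:~R = -1 :> rat by [].
  rewrite subnn; ring.
- ring.
Qed.



Lemma gbinomSS y j : gbinom (y + 1) j.+1 * j.+1%:R = (y + 1) * gbinom y j.
Proof.
rewrite /gbinom big_ord_recl /= factS natrM subr0.
have h1 : (j.+1%:R : rat) != 0 by rewrite pnatr_eq0.
have h2 : ((j`!)%:R : rat) != 0 by rewrite pnatr_eq0 -lt0n fact_gt0.
have -> : \prod_(i < j) (y + 1 - (bump 0 i)%:R) = \prod_(i < j) (y - i%:R).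
  by apply: eq_bigr => i _; rewrite /bump /= add1n -natr1; ring.
field. by rewrite h2 addrC natr1 h1.
Qed.

Section JacODE.
Variables (K : nat) (al be : rat).
Let h : rat := 2%:R^-1.
Let c (j : nat) : rat := gbinom (K%:R + al + be + j%:R) j * gbinom (K%:R + al) (K - j).
Let P : {poly rat} := \poly_(j < K.+1) (c j * h ^+ j).
Let mu : rat := K%:R * (K%:R + al + be + 1).

Lemma Jcomp : jacobi K al be = P \Po ('X - 1).
Proof.
rewrite comp_polyE (big_ord_widen K.+1 (fun i => P`_i *: ('X - 1) ^+ i)) ?size_poly //.
rewrite big_mkcond /jacobi; apply: eq_bigr => i _ /=.
have -> : (if (i < size P)%N then P`_i *: ('X - 1) ^+ i else 0) = P`_i *: ('X - 1) ^+ i.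
  by case: ifP => // /negbT; rewrite -leqNgt => hi; rewrite nth_default // scale0r.
rewrite coef_poly ltn_ord /= exprMn -polyC_exp [_ * _%:P]mulrC mul_polyC scalerA.
by [].
Qed.

Definition E2 (Q : {poly rat}) : {poly rat} :=
  - (('X + 1) * ('X + 1) - 1) * Q^`()^`() + ((be - al)%:P - (al + be + 2%:R)%:P * ('X + 1)) * Q^`()
  + mu *: Q.

Lemma compODE (Q : {poly rat}) :
  let J := Q \Po ('X - 1) in
  - ('X^2 - 1) * J^`()^`() + ((be - al)%:P - (al + be + 2%:R)%:P * 'X) * J^`() + mu *: J
  = E2 Q \Po ('X - 1).
Proof.
move=> J; rewrite /J /E2 !deriv_comp derivB derivX derivC subr0 !mulr1.
rewrite deriv_comp derivB derivX derivC subr0 !mulr1.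
set q := ('X - 1 : {poly rat}).
rewrite comp_polyD.
rewrite comp_polyD comp_polyZ.
rewrite !comp_polyM.
rewrite raddfN /= !comp_polyB !comp_polyM !comp_polyD !comp_polyC comp_polyX.
rewrite /q -!mul_polyC. ring.
Qed.

Lemma coefE2 Q k : (E2 Q)`_k = Q`_k * ((K%:R - k%:R) * (K%:R + k%:R + al + be + 1))
   - 2%:R * k.+1%:R * (k%:R + al + 1) * Q`_k.+1.
Proof.
have -> : E2 Q = - ('X * ('X * Q^`()^`())) - ('X * Q^`()^`()) *+ 2
   + (be - al)%:P * Q^`() - (al + be + 2%:R)%:P * ('X * Q^`()) - (al + be + 2%:R)%:P * Q^`()
   + mu *: Q.
  rewrite /E2 -!mul_polyC; ring.
rewrite !coefD ?coefB !coefN coefMn !coefCM coefZ !coefXderiv coefXM !coef_deriv.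
case: k => [|k] /=.
  rewrite /mu; ring.
rewrite coefXderiv coef_deriv /mu; ring.
Qed.

Lemma E2P : E2 P = 0.
Proof.
apply/polyP => k; rewrite coefE2 coef0 !coef_poly.
case: (ltngtP k K) => hk.
- have h1 : (k < K.+1)%N by lia.
  have h2 : (k.+1 < K.+1)%N by lia.
  rewrite h1 h2.
  have e : k.+1%:R * (k%:R + al + 1) * c k.+1 =
      (K%:R - k%:R) * (K%:R + k%:R + al + be + 1) * c k.
    rewrite /c.
    have hj : K = (k + (K - k.+1).+1)%N by lia.
    move: (K - k.+1)%N hj => j hj.
    have -> : (K - k = j.+1)%N by lia.
    have e1 := gbinomSS (K%:R + al + be + k%:R) k.
    have e2 := gbinomS (K%:R + al) j.
    have -> : K%:R + al + be + k.+1%:R = K%:R + al + be + k%:R + 1 by rewrite -natr1; ring.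
    have eK : (K%:R : rat) = k%:R + j%:R + 1 by rewrite hj natrD -natr1; ring.
    transitivity ((gbinom (K%:R + al + be + k%:R + 1) k.+1 * k.+1%:R) *
                  (gbinom (K%:R + al) j * (K%:R + al - j%:R))); first by rewrite eK; ring.
    rewrite e1 -e2 eK -!natr1; ring.
  have eh : 2%:R * h = 1 by rewrite /h divff.
  transitivity (h ^+ k * ((K%:R - k%:R) * (K%:R + k%:R + al + be + 1) * c k -
     (2%:R * h) * (k.+1%:R * (k%:R + al + 1) * c k.+1))); first by rewrite exprS; ring.
  by rewrite e eh mul1r subrr mulr0.
- have h1 : (k < K.+1)%N = false by lia.
  have h2 : (k.+1 < K.+1)%N = false by lia.
  by rewrite h1 h2; ring.
- rewrite hk ltnSn ltnn subrr; ring.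
Qed.

Lemma jacODE_sec : - ('X^2 - 1) * (jacobi K al be)^`()^`()
  + ((be - al)%:P - (al + be + 2%:R)%:P * 'X) * (jacobi K al be)^`()
  + (K%:R * (K%:R + al + be + 1)) *: jacobi K al be = 0.
Proof. by rewrite Jcomp compODE E2P rmorph0. Qed.
End JacODE.

Definition jacODE := jacODE_sec.


Definition M2 (h : ser) : ser := fun m => h (m - 1 - 1) - h m.
Notation lmul := lmul_poly_coef.

Lemma lmul_subp f p q m : lmul f (p - q) m = lmul f p m - lmul f q m.
Proof. by rewrite lmul_addp -scaleN1r lmul_scalep mulN1r. Qed.

Lemma lmul_M2 f p m : lmul (M2 f) p m = lmul f p (m - 1 - 1) - lmul f p m.
Proof.
have -> : M2 f = fun k => Zs (Zs f) k + (-1) * f k.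
  by apply: functional_extensionality => k; rewrite /M2 /Zs mulN1r.
by rewrite lmul_addf lmul_scalef !lmulZs mulN1r.
Qed.

Lemma lmul_oppp f p m : lmul f (- p) m = - lmul f p m.
Proof. by rewrite -scaleN1r lmul_scalep mulN1r. Qed.

Lemma M2_lmul f p : M2 (lmul f p) = lmul f ('X * ('X * p) - p).
Proof.
by apply: functional_extensionality => m; rewrite lmul_subp !lmulX /M2.
Qed.

Lemma lmul0 f m : lmul f 0 m = 0.
Proof. by rewrite /lmul_poly_coef size_poly0 big_ord0. Qed.

Lemma comm_M2D (V : ser) : M2 (Ds V) = fun m => Ds (M2 V) m - 2%:R * Zs V m.
Proof.
apply: functional_extensionality => m; rewrite /M2 /Ds /Zs.
have -> : m - 1 - 1 + 1 = m - 1 by ring.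
have -> : m + 1 - 1 - 1 = m - 1 by ring.
rewrite !rmorphB /=; ring.
Qed.

Definition pcoefD r1 r2 m : pcoef (r1 + r2) m = pcoef r1 m + pcoef r2 m.
Proof. by case: m => [k|k] /=; rewrite ?coefD ?addr0. Qed.

Lemma pcoefZ c r m : pcoef (c *: r) m = c * pcoef r m.
Proof. by case: m => [k|k] /=; rewrite ?coefZ ?mulr0. Qed.

Lemma pcoefN r m : pcoef (- r) m = - pcoef r m.
Proof. by case: m => [k|k] /=; rewrite ?coefN ?oppr0. Qed.

Lemma Zs_pcoef r : Zs (pcoef r) = pcoef ('X * r).
Proof.
apply: functional_extensionality => m; rewrite /Zs.
case: m => [[|k]|k] /=; rewrite ?coefXM /=; try by []; congr (r`_ _); lia.
Qed.

Lemma Ds_pcoef r : Ds (pcoef r) = pcoef r^`().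
Proof.
apply: functional_extensionality => m; rewrite /Ds.
case: m => [k|[|k]] /=.
- rewrite coef_deriv addn1 -mulr_natl -natr1; by [].
- have -> : ((-1)%Z%:~R : rat) = -1 by [].
  by rewrite addrC subrr mul0r.
- by rewrite mulr0.
Qed.

Section Main.
Variables (a b : rat) (s0 : int) (n : nat).
Hypothesis hs : a + b = s0%:~R.
Let g := prefactor_coef a b s0.
Let lam : rat := (n%:R + a + b) * (n%:R + 1).

Lemma gODE' : M2 (Ds g) = fun m => (a + b) * Zs g m + (a - b) * g m.
Proof.
apply: functional_extensionality => m; rewrite /M2 /Ds /Zs.
have := gODE a b s0 hs m; rewrite /= -/g -hs => <-.
have -> : m - 1 - 1 + 1 = m - 1 by ring.
rewrite !rmorphB /=; ring.
Qed.

Definition Phi (p : {poly rat}) : {poly rat} :=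
  (a + b) *: ('X * p) + (a - b) *: p + ('X * ('X * p^`()) - p^`()).

Lemma L3 p : M2 (Ds (lmul g p)) = lmul g (Phi p).
Proof.
apply: functional_extensionality => m.
rewrite /Phi !lmul_addp !lmul_scalep ?lmul_oppp !lmulX.
rewrite /M2 !lmulD.
have := lmul_M2 (Ds g) p m; rewrite gODE' lmul_addf !lmul_scalef lmulZs => e.
transitivity (lmul (Ds g) p (m - 1 - 1) - lmul (Ds g) p m
   + (lmul g p^`() (m - 1 - 1) - lmul g p^`() m)); first ring.
rewrite -e; ring.
Qed.

Definition Fop (h : ser) : ser := fun m =>
  - M2 (Ds (Ds h)) m + (a - b) * Ds h m - (2%:R - (a + b)) * Zs (Ds h) m + lam * h m.

Definition Rpoly (p : {poly rat}) : {poly rat} :=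
  - Phi (Phi p) + (2%:R - (2%:R - (a + b))) *: ('X * Phi p) + (a - b) *: Phi p
  + lam *: ('X * ('X * p)) - lam *: p.

Lemma M2F_L p : M2 (Fop (lmul g p)) = lmul g (Rpoly p).
Proof.
apply: functional_extensionality => m.
set V := lmul g p.
have e1 : M2 (Fop V) m = - M2 (M2 (Ds (Ds V))) m + (a - b) * M2 (Ds V) m
    - (2%:R - (a + b)) * M2 (Zs (Ds V)) m + lam * M2 V m.
  unfold Fop, M2; ring.
have e2 : M2 (Zs (Ds V)) m = M2 (Ds V) (m - 1) by [].
have e3 : M2 (M2 (Ds (Ds V))) m = lmul g (Phi (Phi p)) m - 2%:R * lmul g (Phi p) (m - 1).
  rewrite comm_M2D L3.
  have -> : M2 (fun m0 => Ds (lmul g (Phi p)) m0 - 2%:R * Zs (Ds V) m0) m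
     = M2 (Ds (lmul g (Phi p))) m - 2%:R * M2 (Zs (Ds V)) m by rewrite /M2; ring.
  by rewrite L3 e2 /V L3.
rewrite e1 e2 e3 /V L3 M2_lmul /Rpoly.
move: (Phi (Phi p)) (Phi p) => P2 P1.
rewrite !(lmul_addp, lmul_oppp, lmul_scalep, lmulX).
ring.
Qed.

Lemma Rpoly_eq p : Rpoly p = ('X^2 - 1) * (- ('X^2 - 1) * p^`()^`()
  + ((b - a)%:P - (a + b + 2%:R)%:P * 'X) * p^`() + (n%:R * (n%:R + a + b + 1)) *: p).
Proof.
rewrite /Rpoly /Phi /lam !derivE -!mul_polyC.
rewrite !(polyCD, polyCN, polyCB, polyCM, polyC_natr).
ring.
Qed.

Lemma L_ODE : M2 (Fop (lmul g (jacobi n a b))) = fun _ => 0.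
Proof.
rewrite M2F_L Rpoly_eq jacODE mulr0.
by apply: functional_extensionality => m; rewrite lmul0.
Qed.

Variable N : nat.
Hypothesis hN : N%:Z = n%:Z + s0.

Lemma NR : (N%:R : rat) = n%:R + a + b.
Proof.
have : (N%:Z)%:~R = (n%:Z + s0)%:~R :> rat by rewrite hN.
by rewrite rmorphD /= -hs addrA.
Qed.

Lemma M2_pcoef r : M2 (pcoef r) = pcoef ('X * ('X * r) - r).
Proof.
apply: functional_extensionality => m.
have -> : M2 (pcoef r) m = Zs (Zs (pcoef r)) m - pcoef r m by [].
by rewrite !Zs_pcoef pcoefD pcoefN.
Qed.

Lemma pcoef0 m : pcoef 0 m = 0.
Proof. by case: m => [k|k] //=; rewrite coef0. Qed.

Lemma Q_ODE : Fop (pcoef (jacobi N (- a) (- b))) = fun _ => 0.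
Proof.
apply: functional_extensionality => m.
set q := jacobi N (- a) (- b).
have e := jacODE N (- a) (- b); rewrite -/q in e.
have e2 : - ('X^2 - 1) * q^`()^`() + ((- b - - a)%:P - (- a + - b + 2%:R)%:P * 'X) * q^`()
    + (N%:R * (N%:R + - a + - b + 1)) *: q
  = - ('X * ('X * q^`()^`()) - q^`()^`()) + (a - b) *: q^`()
    - (2%:R - (a + b)) *: ('X * q^`()) + lam *: q.
  rewrite NR /lam -!mul_polyC !(polyCD, polyCN, polyCB, polyCM, polyC_natr); ring.
rewrite e2 in e.
rewrite /Fop !Ds_pcoef Zs_pcoef M2_pcoef.
transitivity (pcoef (- ('X * ('X * q^`()^`()) - q^`()^`()) + (a - b) *: q^`()
    - (2%:R - (a + b)) *: ('X * q^`()) + lam *: q) m).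
  by rewrite !(pcoefD, pcoefN, pcoefZ).
by rewrite e pcoef0.
Qed.
End Main.


Lemma XsubC1 : ('X - 1 : {poly rat}) = 'X - 1%:P.
Proof. by rewrite polyC1. Qed.

Lemma jac_term (j : nat) :
  (('X - 1) * (2%:R^-1)%:P) ^+ j = (2%:R^-1 : rat) ^+ j *: ('X - 1%:P) ^+ j.
Proof. by rewrite exprMn -polyC_exp mulrC mul_polyC XsubC1. Qed.

Lemma size_jac K al be : (size (jacobi K al be) <= K.+1)%N.
Proof.
rewrite /jacobi; elim/big_ind: _ => //.
- by rewrite size_poly0.
- by move=> x y hx hy; apply: leq_trans (size_polyD _ _) _; rewrite geq_max hx hy.
- move=> i _; rewrite jac_term scalerA.
  apply: leq_trans (size_scale_leq _ _) _; rewrite size_exp_XsubC; exact: ltn_ord.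
Qed.

Lemma lead_jac K al be :
  (jacobi K al be)`_K = gbinom (K%:R + al + be + K%:R) K * (2%:R^-1) ^+ K.
Proof.
rewrite /jacobi coef_sum big_ord_recr /= big1 ?add0r.
  rewrite coefZ jac_term coefZ subnn gbinom0 mulr1.
  have := monic_exp K (monicXsubC (1 : rat)); rewrite qualifE => /eqP.
  by rewrite lead_coefE size_exp_XsubC /= => ->; rewrite mulr1.
move=> i _; rewrite coefZ jac_term coefZ nth_default ?mulr0 //.
by rewrite size_exp_XsubC.
Qed.

Lemma gbinom_nat k j : gbinom k%:R j = ('C(k, j))%:R.
Proof.
elim: j => [|j IH]; first by rewrite gbinom0 bin0.
have h1 : (j.+1%:R : rat) != 0 by rewrite pnatr_eq0.
apply: (mulIf h1); rewrite gbinomS IH -natrM mulnC mul_bin_left.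
case: (leqP j k) => hj.
  by rewrite natrM natrB // mulrC.
by rewrite bin_small // muln0 mul0r.
Qed.

Lemma pref_neg a b s0 x : s0 - x < 0 -> prefactor_coef a b s0 x = 0.
Proof.
rewrite /prefactor_coef; case: (s0 - x) => // k h; exfalso; lia.
Qed.

Lemma FopE a b n (h : ser) m : Fop a b n h m =
  ((m + 1) * (m + 2%:Z))%:~R * h (m + 2%:Z) + (a - b) * (m + 1)%:~R * h (m + 1)
  + ((n%:R + a + b) * (n%:R + 1) - (m * (m - 1))%:~R - (2%:R - (a + b)) * m%:~R) * h m.
Proof.
rewrite /Fop /M2 /Ds /Zs.
have -> : m - 1 - 1 + 1 + 1 = m by ring.
have -> : m - 1 - 1 + 1 = m - 1 by ring.
have -> : m - 1 + 1 = m by ring.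
have -> : m + 1 + 1 = m + 2%:Z by ring.
rewrite ?rmorphM ?rmorphD ?rmorphB /=.
have -> : ((-1)%:~R : rat) = -1 by [].
have -> : ((1%:Z)%:~R : rat) = 1 by [].
have -> : ((2%:Z)%:~R : rat) = 2%:R by [].
ring.
Qed.

Theorem mainTheorem3 (a b : rat) (s : int) (n N : nat)
  (hs : a + b = s%:~R) (hn : - s <= n%:Z) (hN : N%:Z = n%:Z + s)
  (m : int) (hm : - (n%:Z) <= m) :
  lmul_poly_coef (prefactor_coef a b s) (jacobi n a b) m
    - pcoef (jacobi N (- a) (- b)) m = 0.
Proof.
set g := prefactor_coef a b s.
set p := jacobi n a b.
set q := jacobi N (- a) (- b).
pose H : ser := fun k => lmul_poly_coef g p k - pcoef q k.
have NR : (N%:R : rat) = n%:R + a + b.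
  have : (N%:Z)%:~R = (n%:Z + s)%:~R :> rat by rewrite hN.
  by rewrite rmorphD /= -hs addrA.
have HL : forall k, N%:Z < k -> lmul_poly_coef g p k = 0.
  move=> k hk; rewrite (@lmulE g p k n.+1 (size_jac n a b)); apply: big1 => d _.
  rewrite /g pref_neg ?mulr0 //; have := ltn_ord d; lia.
have HQ : forall k, N%:Z < k -> pcoef q k = 0.
  move=> k; case: k => [k|k] hk //=; rewrite nth_default //.
  by apply: leq_trans (size_jac N _ _) _; lia.
have HH : forall k, N%:Z < k -> H k = 0.
  by move=> k hk; rewrite /H HL // HQ // subrr.
have FH : forall k, Fop a b n H k = Fop a b n (lmul_poly_coef g p) k.
  move=> k; have := congr1 (fun f => f k) (Q_ODE a b s n hs N hN).
  rewrite /= -/q => eQ.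
  transitivity (Fop a b n (lmul_poly_coef g p) k - Fop a b n (pcoef q) k).
    by rewrite !FopE /H; ring.
  by rewrite eQ subr0.
have FHtop : forall k, N%:Z < k -> Fop a b n H k = 0.
  move=> k hk; rewrite FopE !HH ?mulr0 ?addr0 //; lia.
have FHper : forall k, Fop a b n H (k - 1 - 1) = Fop a b n H k.
  move=> k; have := congr1 (fun f => f k) (L_ODE a b s n hs).
  rewrite /M2 /= -/g -/p -!FH => /eqP; rewrite subr_eq0 => /eqP //.
have FH0 : forall k, Fop a b n H k = 0.
  have aux : forall t : nat, forall k, N%:Z < k + t%:Z -> Fop a b n H k = 0.
    elim=> [|t IH] k hk; first by apply: FHtop; lia.
    have -> : k = k + 2%:Z - 1 - 1 by ring.
    rewrite FHper; apply: IH; lia.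
  move=> k; apply: (aux (absz (N%:Z - k)).+1); lia.
have HN : H N = 0.
  rewrite /H (@lmulE g p N n.+1 (size_jac n a b)) big_ord_recr /= big1; last first.
    move=> d _; rewrite /g pref_neg ?mulr0 //; have := ltn_ord d; lia.
  rewrite add0r /p /q lead_jac lead_jac.
  have -> : N%:Z - n%:Z = s by lia.
  rewrite /g /prefactor_coef subrr.
  have -> : (0 : int) = Posz 0%N by [].
  rewrite /binser_coef big_ord1 /= !gbinom0 expr0 !mulr1.
  have -> : n%:R + a + b + n%:R = (N + n)%:R :> rat by rewrite natrD NR; ring.
  have -> : N%:R - a - b + N%:R = (N + n)%:R :> rat by rewrite natrD NR; ring.
  rewrite !gbinom_nat.
  have -> : 'C(N + n, N) = 'C(N + n, n) by rewrite -{2}(addnK n N) bin_sub // leq_addl.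
  have -> : - s = n%:Z + (- N%:Z) by lia.
  have u2 : (2%:R : rat) \is a GRing.unit by rewrite unitfE pnatr_eq0.
  rewrite exprzDr // -exprnN !exprVn.
  have -> : (2%:R : rat) ^ n%:Z = 2%:R ^+ n by [].
  set c := ('C(N + n, n))%:R : rat.
  have h2 : (2%:R : rat) ^+ n != 0 by rewrite expf_neq0 // pnatr_eq0.
  field. by rewrite h2 expf_neq0 // pnatr_eq0.
have down : forall t : nat, (t <= N + n)%N ->
    H (N%:Z - t%:Z) = 0 /\ H (N%:Z - t%:Z + 1) = 0.
  elim=> [|t IH] ht.
    by split; [rewrite subr0 | rewrite HH //; lia].
  have [h1 h2] := IH (ltnW ht).
  have e := FH0 (N%:Z - t.+1%:Z); rewrite FopE in e.
  have e1 : N%:Z - t.+1%:Z + 2%:Z = N%:Z - t%:Z + 1 by lia.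
  have e2 : N%:Z - t.+1%:Z + 1 = N%:Z - t%:Z by lia.
  rewrite e1 e2 h1 h2 !mulr0 !add0r in e.
  split; last by rewrite e2.
  move: e; set mm := N%:Z - t.+1%:Z => e.
  have ec : (n%:R + a + b) * (n%:R + 1) - (mm * (mm - 1))%:~R - (2%:R - (a + b)) * mm%:~R
      = ((N%:Z - mm) * (n%:Z + 1 + mm))%:~R :> rat.
    rewrite !rmorphM !rmorphB !rmorphD /=.
    have -> : ((1%:Z)%:~R : rat) = 1 by [].
    have -> : ((N%:Z)%:~R : rat) = N%:R by [].
    have -> : ((n%:Z)%:~R : rat) = n%:R by [].
    rewrite NR; ring.
  rewrite ec in e.
  have hc : ((N%:Z - mm) * (n%:Z + 1 + mm))%:~R != 0 :> rat.
    rewrite intr_eq0 mulf_neq0 //; apply/eqP; rewrite /mm; lia.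
  by move/eqP: e; rewrite mulf_eq0 (negbTE hc) /= => /eqP.
case: (ltP N%:Z m) => hmN.
  by have := HH m hmN.
have ht : (absz (N%:Z - m) <= N + n)%N by lia.
have [h1 _] := down _ ht.
by have -> : m = N%:Z - (absz (N%:Z - m))%:Z by lia.
Qed.
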